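(* Every closed directed family $\mathcal P\subset\nabla$ is cross modal.
   Context: $\nabla=\{(\lambda,\boldsymbol p):\lambda\ge0,\ 1\ge p_1\ge p_2\ge\dots\ge0,\ \sum_ip_i<\infty\}$, partially ordered componentwise. For $(\lambda,\boldsymbol p)\in\nabla$, $f(k;\lambda,\boldsymbol p)$ is the probability that $X+\sum_iB_i=k$ where $X\sim\mathrm{Poisson}(\lambda)$, $B_i\sim\mathrm{Bernoulli}(p_i)$ are independent, with $f(-1;\cdot)=0$. $\nabla$ carries the topology in which $(\lambda_j,\boldsymbol p_j)\to(\lambda,\boldsymbol p)$ iff $f(k;\lambda_j,\boldsymbol p_j)\to f(k;\lambda,\boldsymbol p)$ for all $k$; closed refers to this topology. The leading mode $m_+(\lambda,\boldsymbol p)$ is the unique integer $k$ with $f(k-1)\le f(k)>f(k+1)$; $m_-=m_+$ unless $f(m_+-1)=f(m_+)$, in which case $m_-=m_+-1$; the modes are the points where $f(\cdot;\lambda,\boldsymbol p)$ is maximal. A family $\mathcal P\subset\nabla$ is directed if $(0,\boldsymbol 0)\in\mathcal P$ and for every $k\ge0$: (a) for each $(\lambda,\boldsymbol p)\in\mathcal P$ with $m_+(\lambda,\boldsymbol p)=k$ there is $(\lambda',\boldsymbol p')\in\mathcal P$ with $(\lambda',\boldsymbol p')\ge(\lambda,\boldsymbol p)$, $m_+(\lambda',\boldsymbol p')=k+1$ and $f(k+1;\lambda',\boldsymbol p')>f(k+1;\lambda,\boldsymbol p)$; (b) for each $(\lambda,\boldsymbol p)\in\mathcal P$ with $m_-(\lambda,\boldsymbol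 p)=k+1$ there is $(\lambda',\boldsymbol p')\in\mathcal P$ with $(\lambda,\boldsymbol p)\ge(\lambda',\boldsymbol p')$, $m_-(\lambda',\boldsymbol p')=k$ and $f(k;\lambda,\boldsymbol p)<f(k;\lambda',\boldsymbol p')$. The family $\mathcal P$ is cross modal if for every $k\ge0$ the likelihood $(\lambda,\boldsymbol p)\mapsto f(k;\lambda,\boldsymbol p)$ attains its maximum over $\mathcal P$ and for every maximiser, $k$ is a mode of $f(\cdot;\lambda,\boldsymbol p)$. *)

(* Defs.v *)
From Stdlib Require Import Reals Lra.
From Coquelicot Require Import Coquelicot.
Open Scope R_scope.

(* A point of nabla: a pair (lambda, p) with p : nat -> R (p 0 = p_1, ...). *)
Definition point := (R * (nat -> R))%type.

Definition in_nabla (x : point) : Prop :=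
  let (l, p) := x in
  0 <= l /\ p 0%nat <= 1 /\
  (forall i, p (S i) <= p i) /\ (forall i, 0 <= p i) /\ ex_series p.

Definition ple (x y : point) : Prop :=
  fst x <= fst y /\ forall i, snd x i <= snd y i.

Definition poisson_pmf (l : R) (k : nat) : R :=
  exp (- l) * l ^ k / INR (Factorial.fact k).

(* pmf of X + B_0 + ... + B_{n-1}, X ~ Poisson(l), B_i ~ Bernoulli(p i) *)
Fixpoint fn (l : R) (p : nat -> R) (n : nat) (k : nat) : R :=
  match n with
  | O => poisson_pmf l k
  | S n' =>
      (1 - p n') * fn l p n' k +
      p n' * (match k with O => 0 | S k' => fn l p n' k' end)
  end.

(* f(k; lambda, p) = P(X + sum_i B_i = k), the limit of the finite partial
   convolutions (sum_i B_i is a.s. finite since sum_i p_i < oo). *)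
Definition f (k : nat) (x : point) : R :=
  real (Lim_seq (fun n => fn (fst x) (snd x) n k)).

Definition fpred (k : nat) (x : point) : R :=
  match k with O => 0 | S k' => f k' x end.

Definition is_mplus (x : point) (k : nat) : Prop :=
  fpred k x <= f k x /\ f k x > f (S k) x.

Definition is_mminus (x : point) (k : nat) : Prop :=
  exists m, is_mplus x m /\
    ((fpred m x = f m x /\ k = Nat.pred m) \/ (fpred m x <> f m x /\ k = m)).

Definition is_mode (x : point) (k : nat) : Prop :=
  forall j, f j x <= f k x.

Definition zero_point : point := (0, fun _ => 0).

Definition closed_fam (P : point -> Prop) : Prop :=
  forall (xs : nat -> point) (x : point),
    (forall j, P (xs j)) -> in_nabla x ->
    (forall k, is_lim_seq (fun j => f k (xs j)) (f k x)) -> P x.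

Definition directed (P : point -> Prop) : Prop :=
  P zero_point /\
  forall k : nat,
    (forall x, P x -> is_mplus x k ->
       exists x', P x' /\ ple x x' /\ is_mplus x' (S k) /\ f (S k) x' > f (S k) x) /\
    (forall x, P x -> is_mminus x (S k) ->
       exists x', P x' /\ ple x' x /\ is_mminus x' k /\ f k x < f k x').

Definition cross_modal (P : point -> Prop) : Prop :=
  forall k : nat,
    (exists x, P x /\ forall y, P y -> f k y <= f k x) /\
    (forall x, P x -> (forall y, P y -> f k y <= f k x) -> is_mode x k).

(* Main.v *)
Require Import Defs.
From Stdlib Require Import Reals Lra Lia ZArith Classical ClassicalEpsilon.
From Coquelicot Require Import Coquelicot.
Import Defs.
Open Scope R_scope.

Definition shft (g : nat -> R) (k : nat) : R := match k with O => 0 | S k' => g k' end.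
Definition Bstep (q : R) (g : nat -> R) (k : nat) : R := (1 - q) * g k + q * shft g k.
Fixpoint gfn (g : nat -> R) (p : nat -> R) (n : nat) : nat -> R :=
  match n with O => g | S n' => Bstep (p n') (gfn g p n') end.
Fixpoint ssum (a : nat -> R) (n : nat) : R :=
  match n with O => 0 | S n' => ssum a n' + a n' end.

Lemma fn_gfn l p n k : fn l p n k = gfn (poisson_pmf l) p n k.
Proof. revert k; induction n; intro k; simpl; auto. unfold Bstep, shft.
  destruct k; rewrite !IHn; auto. Qed.

Definition unit01 (g : nat -> R) := forall k, 0 <= g k <= 1.
Definition p01 (p : nat -> R) := forall i, 0 <= p i <= 1.

Lemma shift01 g : unit01 g -> unit01 (shft g).
Proof. intros H [|k]; simpl; [lra|apply H]. Qed.

Lemma Bstep01 q g : 0 <= q <= 1 -> unit01 g -> unit01 (Bstep q g).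
Proof. intros Hq Hg k. unfold Bstep. pose proof (Hg k). pose proof (shift01 g Hg k).
  split; nra. Qed.

Lemma gfn01 g p n : unit01 g -> p01 p -> unit01 (gfn g p n).
Proof. intros Hg Hp; induction n; simpl; auto. apply Bstep01; auto. Qed.

Lemma Bstep_ext q g h k : (forall k, g k = h k) -> Bstep q g k = Bstep q h k.
Proof. intros H; unfold Bstep, shft; destruct k; rewrite !H; auto. Qed.

Lemma Bstep_comm q r g k : Bstep q (Bstep r g) k = Bstep r (Bstep q g) k.
Proof. unfold Bstep, shft; destruct k; ring. Qed.

Lemma gfn_comm q g p N k : Bstep q (gfn g p N) k = gfn (Bstep q g) p N k.
Proof. revert k; induction N; intro k; simpl; auto.
  rewrite Bstep_comm. apply Bstep_ext. auto. Qed.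

Lemma gfn_ext g h p N k : (forall k, g k = h k) -> gfn g p N k = gfn h p N k.
Proof. intro H; revert k; induction N; intro k; simpl; auto. apply Bstep_ext; auto. Qed.

Lemma Bstep_contr q g h E : 0 <= q <= 1 -> (forall k, Rabs (g k - h k) <= E) ->
  forall k, Rabs (Bstep q g k - Bstep q h k) <= E.
Proof. intros Hq H k. unfold Bstep.
  assert (HE : 0 <= E) by (specialize (H O); pose proof (Rabs_pos (g O - h O)); lra).
  assert (Hs : Rabs (shft g k - shft h k) <= E).
  { destruct k; simpl; [rewrite Rminus_0_r, Rabs_R0; auto | apply H]. }
  replace ((1 - q) * g k + q * shft g k - ((1 - q) * h k + q * shft h k))
    with ((1-q) * (g k - h k) + q * (shft g k - shft h k)) by ring.
  eapply Rle_trans; [apply Rabs_triang|]. rewrite !Rabs_mult.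
  rewrite (Rabs_pos_eq (1-q)) by lra. rewrite (Rabs_pos_eq q) by lra.
  specialize (H k). nra. Qed.

Lemma gfn_contr g h p N E : p01 p -> (forall k, Rabs (g k - h k) <= E) ->
  forall k, Rabs (gfn g p N k - gfn h p N k) <= E.
Proof. intros Hp H; induction N; simpl; auto. apply Bstep_contr; auto. Qed.

Lemma Bstep_lipq q r g k : unit01 g -> Rabs (Bstep q g k - Bstep r g k) <= Rabs (q - r).
Proof. intros Hg. unfold Bstep.
  replace ((1 - q) * g k + q * shft g k - ((1 - r) * g k + r * shft g k))
    with ((q - r) * (shft g k - g k)) by ring.
  rewrite Rabs_mult. pose proof (Hg k). pose proof (shift01 g Hg k).
  assert (Rabs (shft g k - g k) <= 1) by (apply Rabs_le; lra).
  pose proof (Rabs_pos (q - r)). nra. Qed.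

Lemma gfn_lip g h p q N E : unit01 g -> unit01 h -> p01 p -> p01 q ->
  (forall k, Rabs (g k - h k) <= E) ->
  forall k, Rabs (gfn g p N k - gfn h q N k) <= E + ssum (fun i => Rabs (p i - q i)) N.
Proof. intros Hg Hh Hp Hq H. induction N; intro k; simpl.
  - rewrite Rplus_0_r; auto.
  - eapply Rle_trans with (Rabs (Bstep (p N) (gfn g p N) k - Bstep (p N) (gfn h q N) k)
        + Rabs (Bstep (p N) (gfn h q N) k - Bstep (q N) (gfn h q N) k)).
    { replace (Bstep (p N) (gfn g p N) k - Bstep (q N) (gfn h q N) k) with
       ((Bstep (p N) (gfn g p N) k - Bstep (p N) (gfn h q N) k) +
        (Bstep (p N) (gfn h q N) k - Bstep (q N) (gfn h q N) k)) by ring.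
      apply Rabs_triang. }
    pose proof (Bstep_contr (p N) _ _ _ (Hp N) IHN k).
    pose proof (Bstep_lipq (p N) (q N) (gfn h q N) k (gfn01 h q N Hh Hq)).
    lra. Qed.

Lemma exp_in_exp x : exp_in x (exp x).
Proof. unfold exp. destruct (exist_exp x); simpl; auto. Qed.

Lemma ssum_sum_f a n : ssum a (S n) = sum_f_R0 a n.
Proof. induction n; simpl; [ring|]. simpl in IHn. rewrite <- IHn. ring. Qed.

Lemma fact_pos j : 0 < INR (Factorial.fact j).
Proof. apply INR_fact_lt_0. Qed.

Lemma exp_partial x n : 0 <= x -> ssum (fun j => x ^ j / INR (Factorial.fact j)) n <= exp x.
Proof. intros Hx. destruct n.
  - simpl; left; apply exp_pos.
  - rewrite ssum_sum_f.
    replace (sum_f_R0 (fun j => x ^ j / INR (Factorial.fact j)) n) with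
      (sum_f_R0 (fun i => / INR (Factorial.fact i) * x ^ i) n).
    2:{ apply sum_eq; intros; unfold Rdiv; ring. }
    apply sum_incr. apply exp_in_exp. intros.
    apply Rmult_le_pos; [left; apply Rinv_0_lt_compat, fact_pos | apply pow_le; auto].
Qed.

Lemma ssum_nonneg a n : (forall i, 0 <= a i) -> 0 <= ssum a n.
Proof. intros H; induction n; simpl; [lra|]. specialize (H n); lra. Qed.

Lemma ssum_le_term a n j : (forall i, 0 <= a i) -> (j < n)%nat -> a j <= ssum a n.
Proof. intros H; induction n; intros Hj; [lia|]. simpl.
  destruct (Nat.eq_dec j n) as [->|Hne].
  - pose proof (ssum_nonneg a n H); lra.
  - assert (j < n)%nat by lia. specialize (IHn H0). specialize (H n); lra. Qed.

Lemma poisson_nonneg l k : 0 <= l -> 0 <= poisson_pmf l k.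
Proof. intros Hl. unfold poisson_pmf. apply Rmult_le_pos.
  apply Rmult_le_pos; [left; apply exp_pos| apply pow_le; auto].
  left; apply Rinv_0_lt_compat, fact_pos. Qed.

Lemma poisson01 l : 0 <= l -> unit01 (poisson_pmf l).
Proof. intros Hl k. split; [apply poisson_nonneg; auto|].
  unfold poisson_pmf.
  pose proof (exp_partial l (S k) Hl).
  pose proof (ssum_le_term (fun j => l ^ j / INR (Factorial.fact j)) (S k) k) as H2.
  assert (l ^ k / INR (Factorial.fact k) <= exp l).
  { eapply Rle_trans; [apply H2|auto]; [|lia]. intros i.
    apply Rmult_le_pos; [apply pow_le; auto| left; apply Rinv_0_lt_compat, fact_pos]. }
  unfold Rdiv in *. rewrite Rmult_assoc.
  apply Rle_trans with (exp (-l) * exp l).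
  apply Rmult_le_compat_l; [left; apply exp_pos|auto].
  rewrite <- exp_plus. replace (-l + l) with 0 by ring. rewrite exp_0; lra. Qed.

Lemma poisson_derive k x :
  is_derive (fun y => poisson_pmf y k) x (shft (poisson_pmf x) k - poisson_pmf x k).
Proof. unfold poisson_pmf. auto_derive; auto. destruct k; simpl shft.
  - simpl. field.
  - replace (Init.Nat.pred (S k)) with k by auto.
    change (Factorial.fact (S k)) with (S k * Factorial.fact k)%nat.
    rewrite mult_INR. pose proof (fact_pos k). rewrite S_INR in *.
    assert (0 < INR k + 1) by (pose proof (pos_INR k); lra).
    simpl pow. field. lra. Qed.

Lemma poisson_lip k a b : 0 <= a -> 0 <= b ->
  Rabs (poisson_pmf a k - poisson_pmf b k) <= Rabs (a - b).
Proof. intros Ha Hb.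
  destruct (MVT_gen (fun y => poisson_pmf y k) b a
     (fun x => shft (poisson_pmf x) k - poisson_pmf x k)) as [c [Hc Heq]].
  - intros; apply poisson_derive.
  - intros. apply continuity_pt_filterlim.
    apply (ex_derive_continuous (fun y => poisson_pmf y k)).
    eexists; apply poisson_derive.
  - rewrite Heq. rewrite Rabs_mult. rewrite <- (Rmult_1_l (Rabs (a - b))) at 2.
    apply Rmult_le_compat_r; [apply Rabs_pos|].
    assert (0 <= c). { pose proof (Rmin_glb b a 0 Hb Ha) as Hm. lra. }
    pose proof (poisson01 c H k). pose proof (shift01 _ (poisson01 c H) k).
    apply Rabs_le; lra. Qed.

Lemma poisson_derive_shift a k t :
  is_derive (fun t => poisson_pmf (a + t) k) t
    (shft (poisson_pmf (a + t)) k - poisson_pmf (a + t) k).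
Proof.
  assert (Hg : is_derive (fun t : R => a + t) t 1) by (auto_derive; auto; ring).
  pose proof (is_derive_comp (fun y => poisson_pmf y k) (fun t => a + t) t _ 1
     (poisson_derive k (a+t)) Hg) as H.
  simpl in H. unfold scal in H; simpl in H. unfold mult in H; simpl in H.
  rewrite Rmult_1_l in H. exact H. Qed.

Lemma shft_lip k a b : 0 <= a -> 0 <= b ->
  Rabs (shft (poisson_pmf a) k - shft (poisson_pmf b) k) <= Rabs (a - b).
Proof. intros; destruct k; simpl.
  - rewrite Rminus_0_r, Rabs_R0; apply Rabs_pos.
  - apply poisson_lip; auto. Qed.

Lemma poisson_approx a q k : 0 <= a -> 0 <= q ->
  Rabs (Bstep q (poisson_pmf a) k - poisson_pmf (a + q) k) <= 2 * q ^ 2.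
Proof. intros Ha Hq.
  set (phi := fun t => poisson_pmf (a + t) k - (1 - t) * poisson_pmf a k
                       - t * shft (poisson_pmf a) k).
  set (dphi := fun t => (shft (poisson_pmf (a + t)) k - poisson_pmf (a + t) k)
                       + poisson_pmf a k - shft (poisson_pmf a) k).
  assert (Hd : forall t, is_derive phi t (dphi t)).
  { intros t.
    pose proof (poisson_derive_shift a k t) as H1.
    assert (H2 : is_derive (fun t => (1 - t) * poisson_pmf a k) t (- poisson_pmf a k))
      by (auto_derive; auto; ring).
    assert (H3 : is_derive (fun t => t * shft (poisson_pmf a) k) t (shft (poisson_pmf a) k))
      by (auto_derive; auto; ring).
    pose proof (is_derive_minus _ _ _ _ _ (is_derive_minus _ _ _ _ _ H1 H2) H3) as H.
    match type of H with is_derive _ _ ?d => replace (dphi t) with d end.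
    - exact H.
    - unfold dphi, minus, plus, opp; simpl. ring. }
  destruct (MVT_gen phi 0 q dphi) as [c [Hc Heq]].
  - intros; apply Hd.
  - intros. apply continuity_pt_filterlim.
    apply (ex_derive_continuous phi). eexists; apply Hd.
  - rewrite Rmin_left in Hc by lra. rewrite Rmax_right in Hc by lra.
    assert (Hphi0 : phi 0 = 0).
    { unfold phi. rewrite Rplus_0_r. ring. }
    assert (Hb : Rabs (dphi c) <= 2 * q).
    { unfold dphi.
      pose proof (shft_lip k (a + c) a ltac:(lra) Ha).
      pose proof (poisson_lip k (a + c) a ltac:(lra) Ha).
      replace (a + c - a) with c in * by ring.
      rewrite (Rabs_pos_eq c) in * by lra.
      replace (shft (poisson_pmf (a + c)) k - poisson_pmf (a + c) k + poisson_pmf a k -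
        shft (poisson_pmf a) k) with
        ((shft (poisson_pmf (a + c)) k - shft (poisson_pmf a) k) -
         (poisson_pmf (a + c) k - poisson_pmf a k)) by ring.
      eapply Rle_trans; [apply Rabs_triang|]. rewrite Rabs_Ropp. lra. }
    replace (Bstep q (poisson_pmf a) k - poisson_pmf (a + q) k) with (- (phi q - phi 0)).
    2:{ rewrite Hphi0. unfold phi, Bstep. ring. }
    rewrite Rabs_Ropp, Heq, Rabs_mult, Rminus_0_r, (Rabs_pos_eq q) by lra.
    pose proof (Rabs_pos (dphi c)). nra. Qed.

Lemma ssum_mono a n m : (forall i, 0 <= a i) -> (n <= m)%nat -> ssum a n <= ssum a m.
Proof. intros H Hnm. induction Hnm; [lra|]. simpl. specialize (H m); lra. Qed.

Lemma ssum_S a n : ssum a (S n) = ssum a n + a n.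
Proof. reflexivity. Qed.

Lemma hybrid l p N d k : 0 <= l -> p01 p ->
  Rabs (gfn (poisson_pmf l) p (N + d) k -
        gfn (poisson_pmf (l + (ssum p (N + d) - ssum p N))) p N k)
  <= 2 * (ssum (fun i => p i ^ 2) (N + d) - ssum (fun i => p i ^ 2) N).
Proof. intros Hl Hp. revert k. induction d; intro k.
  - rewrite Nat.add_0_r. replace (l + (ssum p N - ssum p N)) with l by ring.
    rewrite Rminus_diag, Rabs_R0. lra.
  - rewrite Nat.add_succ_r. rewrite !ssum_S. change (gfn (poisson_pmf l) p (S (N + d)))
      with (Bstep (p (N + d)%nat) (gfn (poisson_pmf l) p (N + d))).
    set (n := (N + d)%nat) in *.
    set (a := l + (ssum p n - ssum p N)) in *.
    assert (Ha : 0 <= a).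
    { unfold a. pose proof (ssum_mono p N n (fun i => proj1 (Hp i)) ltac:(unfold n; lia)). lra. }
    pose proof (Bstep_contr (p n) _ _ _ (Hp n) IHd k) as H1.
    rewrite (gfn_comm (p n) (poisson_pmf a)) in H1.
    assert (H2 : Rabs (gfn (Bstep (p n) (poisson_pmf a)) p N k - gfn (poisson_pmf (a + p n)) p N k)
               <= 2 * p n ^ 2).
    { apply gfn_contr; auto. intros; apply poisson_approx; auto. apply Hp. }
    replace (l + (ssum p n + p n - ssum p N)) with (a + p n) by (unfold a; ring).
    replace (Bstep (p n) (gfn (poisson_pmf l) p n) k - gfn (poisson_pmf (a + p n)) p N k) with
     ((Bstep (p n) (gfn (poisson_pmf l) p n) k - gfn (Bstep (p n) (poisson_pmf a)) p N k)
      + (gfn (Bstep (p n) (poisson_pmf a)) p N k - gfn (poisson_pmf (a + p n)) p N k)) by ring.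
    eapply Rle_trans; [apply Rabs_triang|]. lra. Qed.

Definition decr (p : nat -> R) := forall i, p (S i) <= p i.

Lemma decr_le p i j : decr p -> (i <= j)%nat -> p j <= p i.
Proof. intros H Hij; induction Hij; [lra|]. specialize (H m); lra. Qed.

Lemma sq_tail p N d : decr p -> p01 p ->
  ssum (fun i => p i ^ 2) (N + d) - ssum (fun i => p i ^ 2) N
  <= p N * (ssum p (N + d) - ssum p N).
Proof. intros Hd Hp. induction d.
  - rewrite Nat.add_0_r. rewrite !Rminus_diag. lra.
  - rewrite Nat.add_succ_r, !ssum_S.
    pose proof (decr_le p N (N + d) Hd ltac:(lia)). pose proof (Hp (N+d)%nat).
    nra. Qed.

Lemma decr_pN p N : decr p -> p01 p -> INR (S N) * p N <= ssum p (S N).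
Proof. intros Hd Hp. assert (forall m, (m <= N)%nat -> INR m * p N <= ssum p m).
  { induction m; intros Hm; [simpl; lra|].
    rewrite S_INR, ssum_S. pose proof (decr_le p m N Hd ltac:(lia)). specialize (IHm ltac:(lia)). lra. }
  rewrite S_INR, ssum_S. specialize (H N (le_n _)). lra. Qed.

Definition ext (g : nat -> R) (z : Z) : R := if (z <? 0)%Z then 0 else g (Z.to_nat z).

Lemma ext_neg g z : (z < 0)%Z -> ext g z = 0.
Proof. intros H; unfold ext. replace (z <? 0)%Z with true; auto. symmetry; apply Z.ltb_lt; auto. Qed.

Lemma ext_nat g n : ext g (Z.of_nat n) = g n.
Proof. unfold ext. replace (Z.of_nat n <? 0)%Z with false.
  - rewrite Nat2Z.id; auto.
  - symmetry; apply Z.ltb_ge; lia. Qed.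

Lemma ext_nonneg g z : (forall k, 0 <= g k) -> 0 <= ext g z.
Proof. intros H; unfold ext; destruct (z <? 0)%Z; auto; lra. Qed.

Lemma ext_eq g z1 z2 : z1 = z2 -> ext g z1 = ext g z2.
Proof. intros ->; auto. Qed.

Lemma ext_Bstep q g z : ext (Bstep q g) z = (1 - q) * ext g z + q * ext g (z - 1).
Proof. destruct (Z_lt_le_dec z 0).
  - rewrite !ext_neg by lia. ring.
  - replace z with (Z.of_nat (Z.to_nat z)) by lia. set (m := Z.to_nat z). rewrite !ext_nat.
    unfold Bstep, shft. destruct m.
    + rewrite ext_neg by lia. auto.
    + replace (Z.of_nat (S m) - 1)%Z with (Z.of_nat m) by lia. rewrite ext_nat. auto. Qed.

Definition MR (g h : nat -> R) := forall s i j : Z, (0 <= s)%Z -> (i <= j)%Z ->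
  ext h (i - s) * ext g j <= ext h (j - s) * ext g i.

Lemma MR_Bstep g h p q : (forall k, 0 <= g k) -> (forall k, 0 <= h k) ->
  0 <= p -> p <= q -> q <= 1 -> MR g h -> MR (Bstep p g) (Bstep q h).
Proof. intros Hg Hh Hp Hpq Hq HM s i j Hs Hij. rewrite !ext_Bstep.
  destruct (Z.eq_dec i j) as [->|Hne]; [lra|].
  set (ai := ext h (i - s)). set (aj := ext h (j - s)).
  set (bi := ext h (i - s - 1)). set (bj := ext h (j - s - 1)).
  set (gi := ext g i). set (gj := ext g j). set (ci := ext g (i - 1)). set (cj := ext g (j - 1)).
  assert (F1 : ai * gj <= aj * gi) by (apply HM; lia).
  assert (F2 : bi * cj <= bj * ci).
  { unfold bi, cj, bj, ci. rewrite (ext_eq h (i - s - 1) (i - 1 - s)) by lia.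
    rewrite (ext_eq h (j - s - 1) (j - 1 - s)) by lia. apply HM; lia. }
  assert (F4 : bi * gj <= bj * gi).
  { unfold bi, bj. rewrite (ext_eq h (i - s - 1) (i - (s + 1))) by lia.
    rewrite (ext_eq h (j - s - 1) (j - (s + 1))) by lia. apply HM; lia. }
  assert (Hnn : forall z, 0 <= ext g z /\ 0 <= ext h z) by (intros; split; apply ext_nonneg; auto).
  assert (E : ((1 - q) * aj + q * bj) * ((1 - p) * gi + p * ci) -
           ((1 - q) * ai + q * bi) * ((1 - p) * gj + p * cj) =
           (1 - q) * (1 - p) * (aj * gi - ai * gj) + q * p * (bj * ci - bi * cj)
           + ((1 - q) * p * (aj * ci - ai * cj) + q * (1 - p) * (bj * gi - bi * gj))) by ring.
  assert (T12 : 0 <= (1 - q) * (1 - p) * (aj * gi - ai * gj) + q * p * (bj * ci - bi * cj)).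
  { apply Rplus_le_le_0_compat; apply Rmult_le_pos; try apply Rmult_le_pos; lra. }
  assert (T34 : 0 <= (1 - q) * p * (aj * ci - ai * cj) + q * (1 - p) * (bj * gi - bi * gj)).
  { destruct (Z.eq_dec s 0) as [Hs0|Hs0].
    - subst s.
      assert (F5 : bi * gj <= aj * ci).
      { unfold bi, aj, ci. rewrite (ext_eq h (i - 0 - 1) ((i - 1) - 0)) by lia.
        apply HM; lia. }
      assert (F6 : ai * cj <= bj * gi).
      { unfold ai, cj, bj. rewrite (ext_eq h (j - 0 - 1) ((j - 1) - 0)) by lia.
        apply HM; lia. }
      replace ((1 - q) * p * (aj * ci - ai * cj) + q * (1 - p) * (bj * gi - bi * gj)) with
        ((1 - q) * p * ((aj * ci - bi * gj) + (bj * gi - ai * cj)) + (q - p) * (bj * gi - bi * gj))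
        by ring.
      apply Rplus_le_le_0_compat; apply Rmult_le_pos; try apply Rmult_le_pos; lra.
    - assert (F3 : ai * cj <= aj * ci).
      { unfold ai, aj, ci, cj. rewrite (ext_eq h (i - s) (i - 1 - (s - 1))) by lia.
        rewrite (ext_eq h (j - s) (j - 1 - (s - 1))) by lia. apply HM; lia. }
      apply Rplus_le_le_0_compat; apply Rmult_le_pos; try apply Rmult_le_pos; lra. }
  lra. Qed.

Lemma MR_gfn g h p q n : unit01 g -> unit01 h -> p01 p -> p01 q ->
  (forall i, p i <= q i) -> MR g h -> MR (gfn g p n) (gfn h q n).
Proof. intros Hg Hh Hp Hq Hpq HM. induction n; simpl; auto.
  apply MR_Bstep; auto.
  - intros k; apply (gfn01 g p n Hg Hp).
  - intros k; apply (gfn01 h q n Hh Hq).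
  - apply Hp.
  - apply Hq. Qed.

Lemma fact_ineq a ii d : (a <= ii)%nat ->
  (Factorial.fact (a + d) * Factorial.fact ii <= Factorial.fact a * Factorial.fact (ii + d))%nat.
Proof. intros H. induction d.
  - rewrite !Nat.add_0_r. lia.
  - rewrite !Nat.add_succ_r. change (Factorial.fact (S (a + d))) with (S (a + d) * Factorial.fact (a + d))%nat.
    change (Factorial.fact (S (ii + d))) with (S (ii + d) * Factorial.fact (ii + d))%nat.
    replace (S (a + d) * Factorial.fact (a + d) * Factorial.fact ii)%nat with
      (S (a + d) * (Factorial.fact (a + d) * Factorial.fact ii))%nat by ring.
    replace (Factorial.fact a * (S (ii + d) * Factorial.fact (ii + d)))%nat with
      (S (ii + d) * (Factorial.fact a * Factorial.fact (ii + d)))%nat by ring.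
    apply Nat.mul_le_mono; lia. Qed.

Lemma poisson_MR_core l l' a ii d : 0 <= l -> l <= l' -> (a <= ii)%nat ->
  poisson_pmf l' a * poisson_pmf l (ii + d) <= poisson_pmf l' (a + d) * poisson_pmf l ii.
Proof. intros Hl Hll' Ha. unfold poisson_pmf. rewrite !pow_add.
  pose proof (fact_pos a) as Fa. pose proof (fact_pos ii) as Fi.
  pose proof (fact_pos (a + d)) as Fad. pose proof (fact_pos (ii + d)) as Fid.
  set (K := exp (- l') * l' ^ a * (exp (- l) * l ^ ii)).
  assert (HK : 0 <= K).
  { unfold K. pose proof (exp_pos (-l')). pose proof (exp_pos (-l)).
    pose proof (pow_le l' a ltac:(lra)). pose proof (pow_le l ii Hl).
    apply Rmult_le_pos; apply Rmult_le_pos; lra. }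
  replace (exp (- l') * l' ^ a / INR (Factorial.fact a) *
           (exp (- l) * (l ^ ii * l ^ d) / INR (Factorial.fact (ii + d)))) with
    (K * (l ^ d * / (INR (Factorial.fact a) * INR (Factorial.fact (ii + d))))) by (unfold K; field; lra).
  replace (exp (- l') * (l' ^ a * l' ^ d) / INR (Factorial.fact (a + d)) *
           (exp (- l) * l ^ ii / INR (Factorial.fact ii))) with
    (K * (l' ^ d * / (INR (Factorial.fact (a + d)) * INR (Factorial.fact ii)))) by (unfold K; field; lra).
  apply Rmult_le_compat_l; auto.
  apply Rmult_le_compat.
  - apply pow_le; auto.
  - left; apply Rinv_0_lt_compat, Rmult_lt_0_compat; auto.
  - apply pow_incr; lra.
  - apply Rinv_le_contravar; [apply Rmult_lt_0_compat; auto|].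
    rewrite <- !mult_INR. apply le_INR. apply fact_ineq; auto. Qed.

Lemma poisson_MR l l' : 0 <= l -> l <= l' -> MR (poisson_pmf l) (poisson_pmf l').
Proof. intros Hl Hll' s i j Hs Hij.
  destruct (Z_lt_le_dec (i - s) 0).
  - rewrite (ext_neg _ (i - s)) by auto. rewrite Rmult_0_l.
    apply Rmult_le_pos; apply ext_nonneg; intros; apply poisson_nonneg; lra.
  - set (a := Z.to_nat (i - s)). set (ii := Z.to_nat i). set (d := Z.to_nat (j - i)).
    rewrite (ext_eq _ (i - s) (Z.of_nat a)) by (unfold a; lia).
    rewrite (ext_eq _ (j - s) (Z.of_nat (a + d))) by (unfold a, d; lia).
    rewrite (ext_eq _ j (Z.of_nat (ii + d))) by (unfold ii, d; lia).
    rewrite (ext_eq _ i (Z.of_nat ii)) by (unfold ii; lia).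
    rewrite !ext_nat. apply poisson_MR_core; auto. unfold a, ii; lia. Qed.

Lemma lim_le u v (a b : R) N : is_lim_seq u a -> is_lim_seq v b ->
  (forall n, (N <= n)%nat -> u n <= v n) -> a <= b.
Proof. intros Hu Hv H.
  apply (is_lim_seq_incr_n u N) in Hu. apply (is_lim_seq_incr_n v N) in Hv.
  assert (H0 : Rbar_le a b).
  { apply (is_lim_seq_le (fun n => u (n + N)%nat) (fun n => v (n + N)%nat)); auto.
    intros; apply H; lia. }
  simpl in H0; auto. Qed.

Lemma lim_le_const u (a c : R) N : is_lim_seq u a -> (forall n, (N <= n)%nat -> u n <= c) -> a <= c.
Proof. intros Hu H. apply (lim_le u (fun _ => c) a c N Hu (is_lim_seq_const c)); auto. Qed.

Lemma lim_ge_const u (a c : R) N : is_lim_seq u a -> (forall n, (N <= n)%nat -> c <= u n) -> c <= a.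
Proof. intros Hu H. apply (lim_le (fun _ => c) u c a N (is_lim_seq_const c) Hu); auto. Qed.

Lemma lim_uniq u (a b : R) : is_lim_seq u a -> is_lim_seq u b -> a = b.
Proof. intros H1 H2. apply is_lim_seq_unique in H1. apply is_lim_seq_unique in H2.
  rewrite H1 in H2. injection H2; auto. Qed.

Lemma ssum_sum_n a n : ssum a (S n) = sum_n a n.
Proof. induction n.
  - rewrite sum_O. simpl. ring.
  - rewrite sum_Sn, <- IHn. rewrite ssum_S. reflexivity. Qed.

Lemma ssum_lim a : ex_series a -> is_lim_seq (ssum a) (Series a).
Proof. intros H. apply Series_correct in H. apply is_lim_seq_incr_1.
  eapply is_lim_seq_ext; [|apply H]. intros; rewrite ssum_sum_n; auto. Qed.

Lemma ssum_le_Series a n : ex_series a -> (forall i, 0 <= a i) -> ssum a n <= Series a.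
Proof. intros H Hp. apply (lim_ge_const (ssum a) (Series a) (ssum a n) n); [apply ssum_lim; auto|].
  intros m Hm. apply ssum_mono; auto. Qed.

Lemma lim_telescope u b : (forall n, Rabs (u (S n) - u n) <= b n) -> ex_series b ->
  exists L : R, is_lim_seq u L.
Proof. intros Hb Hs.
  assert (Hd : ex_series (fun n => u (S n) - u n)).
  { apply (@ex_series_le R_AbsRing R_CompleteNormedModule _ b); auto. }
  destruct Hd as [L HL].
  exists (u O + L). apply is_lim_seq_incr_1.
  assert (E : forall n, u (S n) = u O + ssum (fun n => u (S n) - u n) (S n)).
  { induction n; [simpl; ring|]. rewrite ssum_S. lra. }
  eapply is_lim_seq_ext; [intros n; symmetry; apply E|].
  apply is_lim_seq_plus'; [apply is_lim_seq_const|].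
  apply is_lim_seq_ext with (sum_n (fun n => u (S n) - u n)).
  - intros; rewrite ssum_sum_n; auto.
  - exact HL. Qed.

Lemma nabla_l l p : in_nabla (l, p) -> 0 <= l.
Proof. intros [H _]; auto. Qed.
Lemma nabla_decr l p : in_nabla (l, p) -> decr p.
Proof. intros (_ & _ & H & _); auto. Qed.
Lemma nabla_p01 l p : in_nabla (l, p) -> p01 p.
Proof. intros (_ & H0 & Hd & Hn & _) i. split; auto.
  pose proof (decr_le p 0 i Hd ltac:(lia)). lra. Qed.
Lemma nabla_ser l p : in_nabla (l, p) -> ex_series p.
Proof. intros (_ & _ & _ & _ & H); auto. Qed.

Lemma gfn_step_bound g p n k : unit01 g -> p01 p ->
  Rabs (gfn g p (S n) k - gfn g p n k) <= p n.
Proof. intros Hg Hp. simpl. pose proof (Bstep_lipq (p n) 0 (gfn g p n) k (gfn01 g p n Hg Hp)).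
  unfold Bstep in *. replace ((1 - 0) * gfn g p n k + 0 * shft (gfn g p n) k) with (gfn g p n k) in H by ring.
  rewrite Rminus_0_r in H. rewrite (Rabs_pos_eq (p n)) in H by apply Hp. auto. Qed.

Lemma f_lim l p k : in_nabla (l, p) -> is_lim_seq (fun n => fn l p n k) (f k (l, p)).
Proof. intros Hx.
  destruct (lim_telescope (fun n => fn l p n k) p) as [L HL].
  - intros n. rewrite !fn_gfn. apply gfn_step_bound.
    + apply poisson01, (nabla_l _ _ Hx).
    + apply (nabla_p01 _ _ Hx).
  - apply (nabla_ser _ _ Hx).
  - unfold f. simpl. rewrite (is_lim_seq_unique _ _ HL). simpl. auto. Qed.

Lemma f01 x : in_nabla x -> unit01 (fun k => f k x).
Proof. destruct x as [l p]. intros Hx k. pose proof (f_lim l p k Hx) as H.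
  assert (forall n, 0 <= fn l p n k <= 1).
  { intros n. rewrite fn_gfn. apply gfn01; [apply poisson01, (nabla_l _ _ Hx)|apply (nabla_p01 _ _ Hx)]. }
  split; [apply (lim_ge_const _ _ _ 0 H)|apply (lim_le_const _ _ _ 0 H)]; intros; apply H0. Qed.

Lemma ssum_ext a b K : (forall j, a j = b j) -> ssum a K = ssum b K.
Proof. intros H; induction K; simpl; auto. rewrite IHK, H; auto. Qed.

Lemma ssum_scal c a K : ssum (fun j => c * a j) K = c * ssum a K.
Proof. induction K; simpl; [ring|]. rewrite IHK; ring. Qed.

Lemma ssum_shft g K : ssum (shft g) (S K) = ssum g K.
Proof. induction K; [simpl; ring|]. rewrite ssum_S, IHK. simpl. ring. Qed.

Lemma ssum_Bstep q g K : ssum (Bstep q g) K = (1 - q) * ssum g K + q * ssum (shft g) K.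
Proof. induction K; simpl; [ring|]. rewrite IHK. unfold Bstep. ring. Qed.

Lemma gfn_psum g p n : (forall k, 0 <= g k) -> p01 p -> (forall K, ssum g K <= 1) ->
  forall K, ssum (gfn g p n) K <= 1.
Proof. intros Hg Hp H1. induction n; intros K; simpl; auto.
  rewrite ssum_Bstep.
  assert (ssum (shft (gfn g p n)) K <= 1).
  { destruct K; [simpl; lra|]. rewrite ssum_shft; auto. }
  specialize (IHn K). pose proof (Hp n). nra. Qed.

Lemma poisson_psum l K : 0 <= l -> ssum (poisson_pmf l) K <= 1.
Proof. intros Hl. unfold poisson_pmf.
  rewrite (ssum_ext _ (fun j => exp (- l) * (l ^ j / INR (Factorial.fact j)))) by (intros; unfold Rdiv; ring).
  rewrite ssum_scal. pose proof (exp_partial l K Hl).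
  pose proof (exp_pos (-l)).
  apply Rle_trans with (exp (- l) * exp l); [apply Rmult_le_compat_l; lra|].
  rewrite <- exp_plus. replace (-l + l) with 0 by ring. rewrite exp_0; lra. Qed.

Lemma ssum_lim_seq (u : nat -> nat -> R) (v : nat -> R) K :
  (forall j, is_lim_seq (fun n => u n j) (v j)) -> is_lim_seq (fun n => ssum (u n) K) (ssum v K).
Proof. intros H; induction K; simpl.
  - apply is_lim_seq_const.
  - apply is_lim_seq_plus'; auto. Qed.

Lemma f_psum x K : in_nabla x -> ssum (fun j => f j x) K <= 1.
Proof. destruct x as [l p]; intros Hx.
  apply (lim_le_const (fun n => ssum (fn l p n) K) _ _ 0).
  - apply ssum_lim_seq. intros j. apply f_lim; auto.
  - intros n _. rewrite (ssum_ext _ (gfn (poisson_pmf l) p n)) by (intros; apply fn_gfn).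
    apply gfn_psum.
    + intros; apply poisson_nonneg, (nabla_l _ _ Hx).
    + apply (nabla_p01 _ _ Hx).
    + intros; apply poisson_psum, (nabla_l _ _ Hx). Qed.

Lemma exp_le x y : x <= y -> exp x <= exp y.
Proof. intros [H|H]; [left; apply exp_increasing; auto| subst; lra]. Qed.

Definition wsum (z : R) (g : nat -> R) (K : nat) := ssum (fun j => z ^ j * g j) K.

Lemma wsum_shft z X K : wsum z (shft X) (S K) = z * wsum z X K.
Proof. unfold wsum. induction K; [simpl; ring|].
  rewrite ssum_S, IHK. simpl. ring. Qed.

Lemma wsum_nonneg z X K : 0 <= z -> (forall k, 0 <= X k) -> 0 <= wsum z X K.
Proof. intros Hz HX. unfold wsum. apply ssum_nonneg. intros; apply Rmult_le_pos; auto.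
  apply pow_le; auto. Qed.

Lemma wsum_Bstep z q X K : wsum z (Bstep q X) K = (1 - q) * wsum z X K + q * wsum z (shft X) K.
Proof. unfold wsum. induction K; simpl; [ring|]. rewrite IHK. unfold Bstep. ring. Qed.

Lemma gfn_gf z g p n B : 0 <= z <= 1 -> (forall k, 0 <= g k) -> unit01 g -> p01 p ->
  (forall K, wsum z g K <= B) ->
  forall K, wsum z (gfn g p n) K <= B * exp (- (1 - z) * ssum p n).
Proof. intros Hz Hg0 Hg Hp HB. induction n; intros K; simpl gfn.
  - simpl ssum. rewrite Rmult_0_r, exp_0, Rmult_1_r; auto.
  - rewrite wsum_Bstep. set (X := gfn g p n).
    assert (HX : forall k, 0 <= X k) by (intros; apply (gfn01 g p n Hg Hp)).
    assert (Hs : wsum z (shft X) K <= z * wsum z X K).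
    { destruct K; [unfold wsum; simpl; lra|]. rewrite wsum_shft.
      apply Rmult_le_compat_l; [lra|]. unfold wsum. rewrite ssum_S.
      pose proof (pow_le z K (proj1 Hz)). pose proof (HX K). nra. }
    pose proof (wsum_nonneg z X K (proj1 Hz) HX) as HW.
    pose proof (IHn K) as HI. fold X in HI. pose proof (Hp n) as Hpn.
    assert (H1 : wsum z (Bstep (p n) X) K <= (1 - p n * (1 - z)) * wsum z X K).
    { rewrite wsum_Bstep. nra. }
    rewrite <- wsum_Bstep.
    eapply Rle_trans; [apply H1|].
    pose proof (exp_ineq1_le (- (p n * (1 - z)))).
    assert (0 <= 1 - p n * (1 - z)) by nra.
    apply Rle_trans with (exp (- (p n * (1 - z))) * (B * exp (- (1 - z) * ssum p n))).
    + apply Rmult_le_compat; lra.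
    + rewrite ssum_S. replace (- (1 - z) * (ssum p n + p n)) with
        (- (p n * (1 - z)) + - (1 - z) * ssum p n) by ring.
      rewrite exp_plus. lra. Qed.

Lemma poisson_gf z l K : 0 <= z <= 1 -> 0 <= l -> wsum z (poisson_pmf l) K <= exp (- (1 - z) * l).
Proof. intros Hz Hl. unfold wsum, poisson_pmf.
  rewrite (ssum_ext _ (fun j => exp (- l) * ((z * l) ^ j / INR (Factorial.fact j))))
    by (intros; rewrite Rpow_mult_distr; unfold Rdiv; ring).
  rewrite ssum_scal. pose proof (exp_partial (z * l) K ltac:(nra)).
  pose proof (exp_pos (-l)).
  apply Rle_trans with (exp (- l) * exp (z * l)); [apply Rmult_le_compat_l; lra|].
  rewrite <- exp_plus. right; f_equal; ring. Qed.

Lemma f_gf z k x N : 0 <= z <= 1 -> in_nabla x ->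
  z ^ k * f k x <= exp (- (1 - z) * (fst x + ssum (snd x) N)).
Proof. destruct x as [l p]; simpl; intros Hz Hx.
  pose proof (nabla_l _ _ Hx) as Hl. pose proof (nabla_p01 _ _ Hx) as Hp.
  apply (lim_le_const (fun n => z ^ k * fn l p n k) _ _ N).
  - apply is_lim_seq_mult'; [apply is_lim_seq_const|apply f_lim; auto].
  - intros n Hn. rewrite fn_gfn.
    pose proof (gfn_gf z (poisson_pmf l) p n _ Hz (fun k => poisson_nonneg l k Hl) (poisson01 l Hl) Hp
                 (fun K => poisson_gf z l K Hz Hl) (S k)) as H.
    unfold wsum in H. rewrite ssum_S in H.
    assert (0 <= ssum (fun j => z ^ j * gfn (poisson_pmf l) p n j) k).
    { apply ssum_nonneg. intros; apply Rmult_le_pos; [apply pow_le; lra|].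
      apply (gfn01 _ p n (poisson01 l Hl) Hp). }
    assert (exp (- (1 - z) * l) * exp (- (1 - z) * ssum p n) <= exp (- (1 - z) * (l + ssum p N))).
    { rewrite <- exp_plus. apply exp_le.
      pose proof (ssum_mono p N n (fun i => proj1 (Hp i)) Hn). nra. }
    lra. Qed.

Lemma lim_by_bound (v w : nat -> R) (V : R) : (forall d, Rabs (v d - V) <= w d) ->
  is_lim_seq w 0 -> is_lim_seq v V.
Proof. intros H Hw.
  apply is_lim_seq_le_le with (fun d => V - w d) (fun d => V + w d).
  - intros d. specialize (H d). apply Rabs_le_between in H. lra.
  - replace (Finite V) with (Finite (V - 0)) by (f_equal; ring).
    apply is_lim_seq_minus'; [apply is_lim_seq_const|auto].
  - replace (Finite V) with (Finite (V + 0)) by (f_equal; ring).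
    apply is_lim_seq_plus'; [apply is_lim_seq_const|auto]. Qed.

Lemma lim_abs_diff_le u v (U V B : R) : is_lim_seq u U -> is_lim_seq v V ->
  (forall n, Rabs (u n - v n) <= B) -> Rabs (U - V) <= B.
Proof. intros Hu Hv H.
  apply (lim_le_const (fun n => Rabs (u n - v n)) _ _ 0); [|intros; auto].
  apply (is_lim_seq_abs _ (Finite (U - V))). apply is_lim_seq_minus'; auto. Qed.

Lemma Series_nonneg' p : ex_series p -> (forall i, 0 <= p i) -> 0 <= Series p.
Proof. intros H Hp. pose proof (ssum_le_Series p 0 H Hp). simpl in H0; auto. Qed.

Lemma f_approx l p N k C : in_nabla (l, p) -> Series p <= C ->
  Rabs (f k (l, p) - gfn (poisson_pmf (l + (Series p - ssum p N))) p N k) <= 2 * C * C / INR (S N).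
Proof. intros Hx HC.
  pose proof (nabla_l _ _ Hx) as Hl. pose proof (nabla_p01 _ _ Hx) as Hp.
  pose proof (nabla_decr _ _ Hx) as Hd. pose proof (nabla_ser _ _ Hx) as Hs.
  assert (Hpn : forall i, 0 <= p i) by (intros; apply Hp).
  pose proof (Series_nonneg' p Hs Hpn) as HS0.
  assert (HN : 0 < INR (S N)) by (apply lt_0_INR; lia).
  assert (HpN : p N <= C / INR (S N)).
  { pose proof (decr_pN p N Hd Hp). pose proof (ssum_le_Series p (S N) Hs Hpn).
    apply Rmult_le_reg_l with (INR (S N)); auto. field_simplify; lra. }
  apply (lim_abs_diff_le (fun d => fn l p (N + d) k)
           (fun d => gfn (poisson_pmf (l + (ssum p (N + d) - ssum p N))) p N k)).
  - apply (is_lim_seq_ext (fun d => fn l p (d + N) k)); [intros; f_equal; lia|].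
    apply (is_lim_seq_incr_n (fun n => fn l p n k)). apply f_lim; auto.
  - apply lim_by_bound with (fun d => Rabs (ssum p (N + d) - Series p)).
    + intros d. apply gfn_contr; auto. intros j.
      replace (ssum p (N + d) - Series p) with
        ((l + (ssum p (N + d) - ssum p N)) - (l + (Series p - ssum p N))) by ring.
      apply poisson_lip.
      * pose proof (ssum_mono p N (N + d) Hpn ltac:(lia)). lra.
      * pose proof (ssum_le_Series p N Hs Hpn). lra.
    + replace 0 with (Rabs (Series p - Series p)) by (rewrite Rminus_diag; apply Rabs_R0).
      apply (is_lim_seq_abs _ (Finite (Series p - Series p))).
      apply is_lim_seq_minus'; [|apply is_lim_seq_const].
      apply (is_lim_seq_ext (fun d => ssum p (d + N))); [intros; f_equal; lia|].
      apply (is_lim_seq_incr_n (ssum p)). apply ssum_lim; auto.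
  - intros d. rewrite fn_gfn.
    eapply Rle_trans; [apply hybrid; auto|].
    pose proof (sq_tail p N d Hd Hp).
    pose proof (ssum_le_Series p (N + d) Hs Hpn).
    pose proof (ssum_nonneg p N Hpn). pose proof (ssum_mono p N (N + d) Hpn ltac:(lia)).
    assert (0 <= p N) by apply Hp.
    apply Rle_trans with (2 * (p N * C)); [nra|].
    replace (2 * C * C / INR (S N)) with (2 * (C / INR (S N) * C)) by (field; lra).
    nra. Qed.

Lemma ext_lim (u : nat -> nat -> R) (v : nat -> R) z :
  (forall j, is_lim_seq (fun n => u n j) (v j)) -> is_lim_seq (fun n => ext (u n) z) (ext v z).
Proof. intros H. unfold ext. destruct (z <? 0)%Z; [apply is_lim_seq_const| apply H]. Qed.

Lemma f_MR l p l' q : in_nabla (l, p) -> in_nabla (l', q) -> l <= l' -> (forall i, p i <= q i) ->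
  MR (fun k => f k (l, p)) (fun k => f k (l', q)).
Proof. intros Hx Hy Hll Hpq s i j Hs Hij.
  pose proof (nabla_l _ _ Hx). pose proof (nabla_l _ _ Hy).
  assert (HM : forall n, MR (fn l p n) (fn l' q n)).
  { intros n si ii jj Hsi Hiijj.
    pose proof (MR_gfn _ _ p q n (poisson01 l H) (poisson01 l' H0) (nabla_p01 _ _ Hx)
      (nabla_p01 _ _ Hy) Hpq (poisson_MR l l' H Hll) si ii jj Hsi Hiijj).
    unfold ext in *. rewrite !fn_gfn. auto. }
  apply (lim_le (fun n => ext (fn l' q n) (i - s) * ext (fn l p n) j)
                (fun n => ext (fn l' q n) (j - s) * ext (fn l p n) i) _ _ 0).
  - apply is_lim_seq_mult'; apply ext_lim; intros; apply f_lim; auto.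
  - apply is_lim_seq_mult'; apply ext_lim; intros; apply f_lim; auto.
  - intros n _. apply HM; auto. Qed.

Lemma fn_zero n k : fn 0 (fun _ => 0) n k = poisson_pmf 0 k.
Proof. revert k; induction n; intros k; simpl; auto. destruct k; rewrite IHn; ring. Qed.

Lemma f_zero k : f k zero_point = match k with O => 1 | S _ => 0 end.
Proof. unfold f, zero_point. simpl.
  rewrite (Lim_seq_ext _ (fun _ => poisson_pmf 0 k)) by (intros; apply fn_zero).
  rewrite Lim_seq_const. simpl. unfold poisson_pmf. destruct k; simpl.
  - rewrite Ropp_0, exp_0. field.
  - rewrite Rmult_0_l, Rmult_0_r. unfold Rdiv; ring. Qed.

Lemma exists_mplus P : directed P -> forall k, exists y, P y /\ is_mplus y k.
Proof. intros [H0 HD] k. induction k.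
  - exists zero_point. split; auto. unfold is_mplus. simpl. rewrite !f_zero. lra.
  - destruct IHk as [y [Py Hy]]. destruct (proj1 (HD k) y Py Hy) as [y' [Py' [_ [Hy' _]]]].
    exists y'; auto. Qed.

Lemma ext_nat0 g n : ext g (Z.of_nat n - 0) = g n.
Proof. rewrite Z.sub_0_r. apply ext_nat. Qed.

Lemma least_desc (g : nat -> R) j : g j > g (S j) ->
  exists m, g m > g (S m) /\ forall i, (i < m)%nat -> g i <= g (S i).
Proof. induction j as [j IH] using (well_founded_induction lt_wf). intros Hj.
  destruct (classic (forall i, (i < j)%nat -> g i <= g (S i))) as [H|H].
  - exists j; auto.
  - apply not_all_ex_not in H. destruct H as [i Hi].
    apply imply_to_and in Hi. destruct Hi as [Hij Hi]. apply (IH i Hij). lra. Qed.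

Lemma maximizer_mode P k x : (forall x, P x -> in_nabla x) -> directed P -> P x ->
  (forall y, P y -> f k y <= f k x) -> is_mode x k.
Proof. intros Hn HD Px Hmax.
  pose proof (Hn x Px) as Hx. destruct x as [l p].
  set (g := fun j => f j (l, p)).
  assert (Hg01 : unit01 g) by (apply f01; auto).
  assert (Hpos : 0 < g k).
  { destruct (exists_mplus P HD k) as [y [Py Hy]]. pose proof (Hmax y Py).
    pose proof (f01 y (Hn y Py) (S k)). destruct Hy. unfold g. lra. }
  assert (HMg : MR g g) by (apply f_MR; auto; intros; lra).
  assert (Hex : exists j, g j > g (S j)).
  { apply NNPP. intros Hne.
    assert (Hinc : forall j, g j <= g (S j)).
    { intros j. apply Rnot_lt_le. intros Hc. apply Hne. exists j. lra. }
    assert (Hge : forall M, g k <= g (k + M)%nat).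
    { induction M; [rewrite Nat.add_0_r; lra|]. rewrite Nat.add_succ_r. specialize (Hinc (k + M)%nat). lra. }
    assert (Hs : forall M, INR M * g k <= ssum g (k + M)).
    { induction M.
      - simpl. rewrite Rmult_0_l. apply ssum_nonneg. intros; apply Hg01.
      - rewrite Nat.add_succ_r, ssum_S, S_INR. specialize (Hge M). lra. }
    destruct (archimed (/ g k)) as [Har _].
    set (M := Z.to_nat (up (/ g k))).
    assert (HM : / g k < INR M).
    { unfold M. rewrite INR_IZR_INZ. rewrite Z2Nat.id; [lra|].
      apply le_IZR. pose proof (Rinv_0_lt_compat _ Hpos). lra. }
    pose proof (Hs M). pose proof (f_psum (l, p) (k + M) Hx).
    assert (1 < INR M * g k).
    { apply Rmult_lt_compat_r with (r := g k) in HM; auto. rewrite Rinv_l in HM; lra. }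
    unfold g in *. lra. }
  destruct Hex as [j0 Hj0]. destruct (least_desc g j0 Hj0) as [m [Hm Hmin]].
  assert (Hup : forall j, (j <= m)%nat -> g j <= g m).
  { assert (forall d j, (j + d = m)%nat -> g j <= g m).
    { induction d; intros j Hj.
      - rewrite Nat.add_0_r in Hj; subst; lra.
      - specialize (IHd (S j) ltac:(lia)). specialize (Hmin j ltac:(lia)). lra. }
    intros j Hj. apply (H (m - j)%nat). lia. }
  assert (Hgm : 0 < g m) by (pose proof (Hg01 (S m)); lra).
  assert (Hdown : forall j, (m <= j)%nat -> g (S j) <= g j).
  { intros j Hj. pose proof (HMg 1%Z (Z.of_nat (S m)) (Z.of_nat (S j)) ltac:(lia) ltac:(lia)) as H.
    rewrite (ext_eq g (Z.of_nat (S m) - 1) (Z.of_nat m)) in H by lia.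
    rewrite (ext_eq g (Z.of_nat (S j) - 1) (Z.of_nat j)) in H by lia.
    rewrite !ext_nat in H. pose proof (Hg01 j). pose proof (Hg01 (S j)).
    assert (g j * g (S m) <= g j * g m) by (apply Rmult_le_compat_l; lra).
    apply Rmult_le_reg_l with (g m); auto. lra. }
  assert (Hmode : forall j, g j <= g m).
  { intros j. destruct (le_lt_dec j m) as [Hj|Hj]; [apply Hup; auto|].
    induction Hj as [|m' Hj IH]; [specialize (Hdown m (le_n _)); lra|].
    specialize (Hdown m' ltac:(lia)). lra. }
  assert (Hmp : is_mplus (l, p) m).
  { split; [|exact Hm]. destruct m; simpl; [apply Hg01|]. exact (Hmin m ltac:(lia)). }
  intros j. apply Rnot_lt_le. intros Hjk. fold g in Hjk |- *.
  destruct HD as [_ HD].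
  destruct (lt_eq_lt_dec m k) as [[Hmk|Hmk]|Hkm].
  -
    destruct (proj1 (HD m) (l, p) Px Hmp) as [[l' q] [Px' [[Hl' Hq] [_ Hf]]]].
    simpl in Hl', Hq.
    pose proof (Hn _ Px') as Hx'.
    pose proof (f_MR l p l' q Hx Hx' Hl' Hq 0%Z (Z.of_nat (S m)) (Z.of_nat k) ltac:(lia) ltac:(lia)) as H.
    rewrite !ext_nat0, !ext_nat in H.
    pose proof (Hmax _ Px'). pose proof (Hg01 (S m)). unfold g in *.
    set (A := f (S m) (l, p)) in *. set (A' := f (S m) (l', q)) in *.
    set (K := f k (l, p)) in *. set (K' := f k (l', q)) in *.
    assert (K' * A <= K * A) by (apply Rmult_le_compat_r; lra).
    assert (A * K < A' * K) by (apply Rmult_lt_compat_r; lra).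
    lra.
  - subst k. specialize (Hmode j). unfold g in *. lra.
  -
    assert (Hmm : exists k', (k <= k')%nat /\ is_mminus (l, p) (S k')).
    { destruct (Req_dec (fpred m (l, p)) (f m (l, p))) as [He|He].
      - destruct m as [|m0]; [lia|].
        simpl in He. fold g in He.
        destruct (Nat.eq_dec k m0) as [->|Hk0]; [specialize (Hmode j); unfold g in *; lra|].
        destruct m0 as [|k']; [lia|].
        exists k'. split; [lia|]. exists (S (S k')). split; auto.
      - exists (pred m). split; [lia|]. exists m. split; auto. right. split; auto. lia. }
    destruct Hmm as [k' [Hkk' Hmm]].
    destruct (proj2 (HD k') (l, p) Px Hmm) as [[l' q] [Px' [[Hl' Hq] [_ Hf]]]].
    simpl in Hl', Hq.
    pose proof (Hn _ Px') as Hx'.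
    pose proof (f_MR l' q l p Hx' Hx Hl' Hq 0%Z (Z.of_nat k) (Z.of_nat k') ltac:(lia) ltac:(lia)) as H.
    rewrite !ext_nat0, !ext_nat in H.
    pose proof (Hmax _ Px'). pose proof (Hg01 k'). unfold g in *.
    set (A := f k' (l, p)) in *. set (A' := f k' (l', q)) in *.
    set (K := f k (l, p)) in *. set (K' := f k (l', q)) in *.
    assert (A * K' <= A * K) by (apply Rmult_le_compat_l; lra).
    assert (A * K < A' * K) by (apply Rmult_lt_compat_r; lra).
    lra. Qed.

Lemma inv_S_lim : is_lim_seq (fun n => / INR (S n)) 0.
Proof. apply (is_lim_seq_incr_1 (fun n => / INR n)).
  replace (Finite 0) with (Rbar_inv p_infty) by reflexivity.
  apply is_lim_seq_inv; [apply is_lim_seq_INR| discriminate]. Qed.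

Lemma BW (v : nat -> R) a b : (forall n, a <= v n <= b) ->
  exists (th : nat -> nat) (L : R), (forall n, (n <= th n)%nat) /\ is_lim_seq (fun n => v (th n)) L.
Proof. intros Hv.
  destruct (Bolzano_Weierstrass v (fun c => a <= c <= b) (compact_P3 a b) Hv) as [L HL].
  assert (H : forall n, exists p, (n <= p)%nat /\ Rabs (v p - L) < / INR (S n)).
  { intros n. assert (Hpos : 0 < / INR (S n)) by (apply Rinv_0_lt_compat, lt_0_INR; lia).
    destruct (HL (disc L (mkposreal _ Hpos)) n) as [p [Hp Hd]].
    - exists (mkposreal _ Hpos). intros y Hy; auto.
    - exists p; split; auto. }
  exists (fun n => proj1_sig (constructive_indefinite_description _ (H n))), L. split.
  - intros n. destruct (constructive_indefinite_description _ (H n)) as [p [Hp Hq]]; simpl; auto.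
  - apply lim_by_bound with (fun n => / INR (S n)); [|apply inv_S_lim].
    intros n. cbv beta. destruct (constructive_indefinite_description _ (H n)) as [p [Hq Hp]]; simpl proj1_sig. lra. Qed.

Section Diag.
Variable u : nat -> nat -> R.
Variable B : R.
Hypothesis Hu : forall i j, 0 <= u i j <= B.

Lemma sel_ex (i : nat) (psi : nat -> nat) :
  exists th : nat -> nat, (forall n, (n <= th n)%nat) /\ exists L : R, is_lim_seq (fun n => u i (psi (th n))) L.
Proof. destruct (BW (fun n => u i (psi n)) 0 B) as [th [L [H1 H2]]]; [intros; apply Hu|].
  exists th; split; eauto. Qed.

Definition sel i psi := proj1_sig (constructive_indefinite_description _ (sel_ex i psi)).

Lemma sel_ge i psi n : (n <= sel i psi n)%nat.
Proof. unfold sel. destruct (constructive_indefinite_description _ (sel_ex i psi)) as [th [H H2]]; simpl; auto. Qed.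

Lemma sel_lim i psi : exists L : R, is_lim_seq (fun n => u i (psi (sel i psi n))) L.
Proof. unfold sel. destruct (constructive_indefinite_description _ (sel_ex i psi)) as [th [H2 H]]; simpl; auto. Qed.

Fixpoint Phi (i : nat) : nat -> nat :=
  match i with
  | O => fun n => sel 0 (fun m => m) n
  | S i' => fun n => Phi i' (sel (S i') (Phi i') n)
  end.

Lemma Phi_lim i : exists L : R, is_lim_seq (fun n => u i (Phi i n)) L.
Proof. destruct i; simpl; [exact (sel_lim 0 (fun m => m))|apply sel_lim]. Qed.

Lemma Phi_ge i n : (n <= Phi i n)%nat.
Proof. revert n; induction i; intros n; simpl.
  - apply sel_ge.
  - pose proof (sel_ge (S i) (Phi i) n). specialize (IHi (sel (S i) (Phi i) n)). lia. Qed.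

Lemma Phi_sub d i n : exists m, (n <= m)%nat /\ Phi (i + d) n = Phi i m.
Proof. revert n; induction d; intros n.
  - exists n; rewrite Nat.add_0_r; auto.
  - rewrite Nat.add_succ_r. simpl. destruct (IHd (sel (S (i + d)) (Phi (i + d)) n)) as [m [Hm Heq]].
    exists m. split; auto. pose proof (sel_ge (S (i + d)) (Phi (i + d)) n). lia. Qed.

Lemma diag : exists (phi : nat -> nat) (L : nat -> R),
  (forall n, (n <= phi n)%nat) /\ forall i, is_lim_seq (fun n => u i (phi n)) (L i).
Proof.
  exists (fun n => Phi n n), (fun i => proj1_sig (constructive_indefinite_description _ (Phi_lim i))).
  split; [intros; apply Phi_ge|].
  intros i. destruct (constructive_indefinite_description _ (Phi_lim i)) as [L HL]; simpl.
  apply is_lim_seq_spec in HL. apply is_lim_seq_spec. intros eps.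
  destruct (HL eps) as [M HM]. exists (i + M)%nat. intros n Hn.
  destruct (Phi_sub (n - i) i n) as [m [Hm Heq]].
  replace (i + (n - i))%nat with n in Heq by lia. rewrite Heq. apply HM. lia. Qed.
End Diag.

Lemma ln_le' x y : 0 < x -> x <= y -> ln x <= ln y.
Proof. intros Hx [H|H]; [left; apply ln_increasing; auto|subst; lra]. Qed.

Lemma f_bound_C k y c : in_nabla y -> 0 < c -> c <= f k y ->
  forall N, fst y + ssum (snd y) N <= -2 * ln ((/2)^k * c).
Proof.
  intros Hy Hc Hf N. pose proof (f_gf (/2) k y N ltac:(lra) Hy) as H.
  set (T := fst y + ssum (snd y) N) in *.
  assert (Hz : 0 < (/2)^k) by (apply pow_lt; lra).
  assert (H1 : (/2)^k * c <= exp (- (1 - /2) * T)).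
  { eapply Rle_trans; [apply Rmult_le_compat_l; [lra|apply Hf]| apply H]. }
  apply ln_le' in H1; [|apply Rmult_lt_0_compat; auto].
  rewrite ln_exp in H1. lra. Qed.

Lemma conv_bound (y x : point) N k C : in_nabla y -> in_nabla x ->
  Series (snd y) <= C -> Series (snd x) <= C ->
  Rabs (f k y - f k x) <= 4 * C * C / INR (S N)
     + (Rabs ((fst y + (Series (snd y) - ssum (snd y) N)) - (fst x + (Series (snd x) - ssum (snd x) N)))
     + ssum (fun i => Rabs (snd y i - snd x i)) N).
Proof. destruct y as [l p], x as [l' q]. cbn [fst snd]. intros Hy Hx Hp Hq.
  pose proof (f_approx l p N k C Hy Hp) as H1.
  pose proof (f_approx l' q N k C Hx Hq) as H2.
  assert (Ha : 0 <= l + (Series p - ssum p N)).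
  { pose proof (nabla_l _ _ Hy). pose proof (ssum_le_Series p N (nabla_ser _ _ Hy) (fun i => proj1 (nabla_p01 _ _ Hy i))). lra. }
  assert (Hb : 0 <= l' + (Series q - ssum q N)).
  { pose proof (nabla_l _ _ Hx). pose proof (ssum_le_Series q N (nabla_ser _ _ Hx) (fun i => proj1 (nabla_p01 _ _ Hx i))). lra. }
  pose proof (gfn_lip (poisson_pmf (l + (Series p - ssum p N))) (poisson_pmf (l' + (Series q - ssum q N))) p q N
    _ (poisson01 _ Ha) (poisson01 _ Hb) (nabla_p01 _ _ Hy) (nabla_p01 _ _ Hx)
    (fun j => poisson_lip j _ _ Ha Hb) k) as H3.
  set (G1 := gfn (poisson_pmf (l + (Series p - ssum p N))) p N k) in *.
  set (G2 := gfn (poisson_pmf (l' + (Series q - ssum q N))) q N k) in *.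
  replace (f k (l, p) - f k (l', q)) with ((f k (l, p) - G1) + (G1 - G2) + - (f k (l', q) - G2)) by ring.
  eapply Rle_trans; [apply Rabs_triang|]. rewrite Rabs_Ropp.
  eapply Rle_trans; [apply Rplus_le_compat_r; apply Rabs_triang|].
  replace (4 * C * C / INR (S N)) with (2 * C * C / INR (S N) + 2 * C * C / INR (S N)).
  2:{ assert (0 < INR (S N)) by (apply lt_0_INR; lia). field; lra. }
  lra. Qed.

Lemma ssum_zero N : ssum (fun _ => 0) N = 0.
Proof. induction N; simpl; [ring|]. rewrite IHN; ring. Qed.

Lemma exists_max P k : (forall x, P x -> in_nabla x) -> closed_fam P -> directed P ->
  exists x, P x /\ forall y, P y -> f k y <= f k x.
Proof.
  intros Hn Hcl HD.
  set (E := fun r => exists y, P y /\ r = f k y).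
  assert (HEb : bound E). { exists 1. intros r [y [Py ->]]. apply (f01 y (Hn y Py) k). }
  assert (HEi : exists r, E r). { exists (f k zero_point). exists zero_point. split; auto. apply HD. }
  destruct (completeness E HEb HEi) as [s [Hub Hlub]].
  assert (Hup : forall y, P y -> f k y <= s) by (intros y Py; apply Hub; exists y; auto).
  assert (Hs : 0 < s).
  { destruct (exists_mplus P HD k) as [y [Py [_ Hy]]]. pose proof (f01 y (Hn y Py) (S k)).
    pose proof (Hup y Py). lra. }
  assert (Hseq : forall j, exists y, P y /\ s - s / (2 * INR (S j)) < f k y).
  { intros j. apply NNPP. intros Hne.
    assert (Hpos : 0 < s / (2 * INR (S j))).
    { apply Rdiv_lt_0_compat; [lra| apply Rmult_lt_0_compat; [lra| apply lt_0_INR; lia]]. }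
    assert (Hb : is_upper_bound E (s - s / (2 * INR (S j)))).
    { intros r [y [Py ->]]. apply Rnot_lt_le. intros Hlt. apply Hne. exists y; auto. }
    specialize (Hlub _ Hb). lra. }
  set (ys := fun j => proj1_sig (constructive_indefinite_description _ (Hseq j))).
  assert (Hys : forall j, P (ys j) /\ s - s / (2 * INR (S j)) < f k (ys j)).
  { intros j. unfold ys. destruct (constructive_indefinite_description _ (Hseq j)) as [y Hy]; simpl; auto. }
  assert (Hyn : forall j, in_nabla (ys j)) by (intros; apply Hn, Hys).
  assert (Hhalf : forall j, s / 2 <= f k (ys j)).
  { intros j. destruct (Hys j) as [_ H].
    assert (s / (2 * INR (S j)) <= s / 2).
    { unfold Rdiv. apply Rmult_le_compat_l; [lra|]. apply Rinv_le_contravar; [lra|].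
      assert (1 <= INR (S j)) by (rewrite S_INR; pose proof (pos_INR j); lra). lra. }
    lra. }
  set (C := -2 * ln ((/2)^k * (s/2))).
  assert (HC : forall j N, fst (ys j) + ssum (snd (ys j)) N <= C).
  { intros j N. apply f_bound_C; auto; lra. }
  assert (Hl0 : forall j, 0 <= fst (ys j)).
  { intros j. destruct (ys j) as [l p] eqn:Eq. apply (nabla_l l p). rewrite <- Eq. auto. }
  assert (Hp01 : forall j, p01 (snd (ys j))).
  { intros j. destruct (ys j) as [l p] eqn:Eq. apply (nabla_p01 l p). rewrite <- Eq. auto. }
  assert (Hpdec : forall j, decr (snd (ys j))).
  { intros j. destruct (ys j) as [l p] eqn:Eq. apply (nabla_decr l p). rewrite <- Eq. auto. }
  assert (Hpser : forall j, ex_series (snd (ys j))).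
  { intros j. destruct (ys j) as [l p] eqn:Eq. apply (nabla_ser l p). rewrite <- Eq. auto. }
  assert (HC0 : 0 <= C) by (pose proof (HC 0%nat 0%nat); pose proof (Hl0 0%nat); simpl in *; lra).
  assert (HSer : forall j, 0 <= Series (snd (ys j)) <= C).
  { intros j. split.
    - apply (ssum_le_Series _ 0); auto. intros; apply Hp01.
    - apply (lim_le_const (ssum (snd (ys j))) _ _ 0); [apply ssum_lim; auto|].
      intros n _. pose proof (HC j n). pose proof (Hl0 j). lra. }
  set (u := fun i j => match i with
                       | O => fst (ys j)
                       | S O => Series (snd (ys j))
                       | S (S i') => snd (ys j) i' end).
  assert (Hu : forall i j, 0 <= u i j <= C + 1).
  { intros [|[|i]] j; unfold u.
    - pose proof (HC j 0%nat); simpl in *; pose proof (Hl0 j); lra.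
    - pose proof (HSer j); lra.
    - pose proof (Hp01 j i); lra. }
  destruct (diag u (C + 1) Hu) as [phi [L [Hphi HL]]].
  set (lamb := L 0%nat). set (sig := L 1%nat). set (pb := fun i => L (S (S i))).
  assert (HL0 : is_lim_seq (fun n => fst (ys (phi n))) lamb) by exact (HL 0%nat).
  assert (HL1 : is_lim_seq (fun n => Series (snd (ys (phi n)))) sig) by exact (HL 1%nat).
  assert (HLp : forall i, is_lim_seq (fun n => snd (ys (phi n)) i) (pb i)) by (intros i; exact (HL (S (S i)))).
  assert (Hlamb : 0 <= lamb) by (apply (lim_ge_const _ _ _ 0 HL0); intros; auto).
  assert (Hsig : sig <= C) by (apply (lim_le_const _ _ _ 0 HL1); intros; apply HSer).
  assert (Hpb01 : p01 pb).
  { intros i; split; [apply (lim_ge_const _ _ _ 0 (HLp i))|apply (lim_le_const _ _ _ 0 (HLp i))];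
    intros; apply Hp01. }
  assert (Hpbdec : decr pb).
  { intros i. apply (lim_le (fun n => snd (ys (phi n)) (S i)) (fun n => snd (ys (phi n)) i) (pb (S i)) (pb i) 0 (HLp (S i)) (HLp i)). intros; apply Hpdec. }
  assert (Hpbsum : forall N, ssum pb N <= sig).
  { intros N. apply (lim_le (fun n => ssum (snd (ys (phi n))) N) (fun n => Series (snd (ys (phi n)))) (ssum pb N) sig 0).
    - apply ssum_lim_seq; auto.
    - auto.
    - intros n _. apply ssum_le_Series; auto. intros; apply Hp01. }
  assert (Hpbser : ex_series pb).
  { destruct (ex_finite_lim_seq_incr (ssum pb) sig) as [l Hl].
    - intros n. rewrite ssum_S. pose proof (Hpb01 n). lra.
    - auto.
    - exists l. apply (is_lim_seq_incr_1 (ssum pb)) in Hl.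
      apply (is_lim_seq_ext _ (sum_n pb)) in Hl; [exact Hl|]. intros; apply ssum_sum_n. }
  assert (HSpb : Series pb <= sig).
  { apply (lim_le_const (ssum pb) _ _ 0); [apply ssum_lim; auto|intros; auto]. }
  assert (HSpb0 : 0 <= Series pb) by (apply (ssum_le_Series _ 0); auto; intros; apply Hpb01).
  set (x := (lamb + sig - Series pb, pb)).
  assert (Hx : in_nabla x).
  { unfold x. repeat split; try lra; try apply Hpb01; try apply Hpbdec; auto. }
  assert (Hconv : forall k', is_lim_seq (fun n => f k' (ys (phi n))) (f k' x)).
  { intros k'. apply is_lim_seq_spec. intros eps.
    destruct eps as [eps Heps]. simpl.
    destruct (archimed (8 * C * C / eps)) as [Har _].
    assert (Hup0 : (0 <= up (8 * C * C / eps))%Z).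
    { apply le_IZR. assert (0 <= 8 * C * C / eps) by (apply Rdiv_le_0_compat; nra). lra. }
    set (N := Z.to_nat (up (8 * C * C / eps))).
    assert (HN : 4 * C * C / INR (S N) < eps / 2).
    { assert (HNr : 8 * C * C / eps < INR (S N)).
      { rewrite S_INR. unfold N. rewrite INR_IZR_INZ, Z2Nat.id by auto. lra. }
      assert (0 < INR (S N)) by (apply lt_0_INR; lia).
      apply Rmult_lt_compat_r with (r := eps) in HNr; auto.
      unfold Rdiv in *. rewrite Rmult_assoc, Rinv_l, Rmult_1_r in HNr by lra.
      apply Rmult_lt_reg_r with (INR (S N)); auto.
      rewrite Rmult_assoc, Rinv_l by lra. lra. }
    set (dn := fun n => Rabs ((fst (ys (phi n)) + (Series (snd (ys (phi n))) - ssum (snd (ys (phi n))) N))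
                 - (fst x + (Series (snd x) - ssum (snd x) N)))
                 + ssum (fun i => Rabs (snd (ys (phi n)) i - snd x i)) N).
    assert (Hdn : is_lim_seq dn 0).
    { unfold dn. replace (Finite 0) with (Finite (Rabs 0 + ssum (fun _ => Rabs 0) N)).
      2:{ rewrite Rabs_R0, ssum_zero. f_equal; ring. }
      apply is_lim_seq_plus'.
      - apply (is_lim_seq_abs _ (Finite 0)).
        replace 0 with ((lamb + (sig - ssum pb N)) - (fst x + (Series (snd x) - ssum (snd x) N)))
          by (unfold x; simpl; ring).
        apply is_lim_seq_minus'; [|apply is_lim_seq_const].
        apply is_lim_seq_plus'; auto. apply is_lim_seq_minus'; auto.
        apply ssum_lim_seq; auto.
      - apply ssum_lim_seq. intros j. apply (is_lim_seq_abs _ (Finite 0)).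
        replace 0 with (pb j - pb j) by ring.
        apply is_lim_seq_minus'; [apply HLp|apply is_lim_seq_const]. }
    apply is_lim_seq_spec in Hdn.
    assert (Heps2 : 0 < eps / 2) by lra.
    destruct (Hdn (mkposreal _ Heps2)) as [M HM]. simpl in HM.
    exists M. intros n Hnm. specialize (HM n Hnm). rewrite Rminus_0_r in HM.
    pose proof (conv_bound (ys (phi n)) x N k' C (Hyn _) Hx (proj2 (HSer _)) ltac:(unfold x; simpl; lra)) as Hb.
    fold (dn n) in Hb. assert (0 <= dn n) by (unfold dn; apply Rplus_le_le_0_compat; [apply Rabs_pos|apply ssum_nonneg; intros; apply Rabs_pos]).
    rewrite Rabs_pos_eq in HM by auto. lra. }
  assert (Px : P x) by (apply (Hcl (fun n => ys (phi n)) x); auto; intros; apply Hys).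
  exists x. split; auto.
  assert (Hfx : f k x = s).
  { apply (lim_uniq (fun n => f k (ys (phi n)))); auto.
    apply (is_lim_seq_subseq (fun n => f k (ys n))).
    - intros Q [N HN]. exists N. intros n Hnm. apply HN. specialize (Hphi n). lia.
    - apply lim_by_bound with (fun n => s / (2 * INR (S n))).
      + intros n. destruct (Hys n) as [Py Hy]. pose proof (Hup _ Py).
        assert (0 < s / (2 * INR (S n))).
        { apply Rdiv_lt_0_compat; [lra| apply Rmult_lt_0_compat; [lra| apply lt_0_INR; lia]]. }
        apply Rabs_le; lra.
      + replace (Finite 0) with (Finite (s / 2 * 0)) by (f_equal; ring).
        apply (is_lim_seq_ext (fun n => s / 2 * / INR (S n))).
        { intros n. field. apply not_0_INR; lia. }
        apply is_lim_seq_mult'; [apply is_lim_seq_const|apply inv_S_lim]. }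
  rewrite Hfx. auto.
Qed.


Theorem theorem3 (P : point -> Prop) :
  (forall x, P x -> in_nabla x) ->
  closed_fam P -> directed P -> cross_modal P.
Proof.
  intros Hn Hcl HD k. split.
  - apply exists_max; auto.
  - intros x Px Hmax. apply (maximizer_mode P k x); auto.
Qed.
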